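(* Let $X$ be a real Hilbert space, $f:X\to\mathbb{R}\cup\{+\infty\}$ a proper $\Phi_{lsc}$-convex function and $\bar x\in\mathrm{dom}(f)$. If $f$ is prox-regular at $\bar x$ for $\bar v\in\partial f(\bar x)$, then there exists $\bar a\ge0$ such that $(\bar a,\ \bar v+2\bar a\bar x)\in\partial_{lsc}f(\bar x)$; in particular $\partial_{lsc}f(\bar x)\ne\emptyset$.
   Context: $\Phi_{lsc}$ is the class of functions $\varphi(x)=-a\|x\|^2+\langle v,x\rangle+c$ ($a\ge0$, $v\in X^*$, $c\in\mathbb{R}$); $f$ is $\Phi_{lsc}$-convex if it is the pointwise supremum of the $\varphi\in\Phi_{lsc}$ with $\varphi\le f$; proper means at least one such $\varphi$ exists and $\mathrm{dom}(f)\ne\emptyset$. $\partial_{lsc}f(\bar x)$ is the set of $(a,v)\in\mathbb{R}_+\times X^*$ with $f(x)-f(\bar x)\ge\langle v,x-\bar x\rangle-a\|x\|^2+a\|\bar x\|^2$ for all $x\in X$. $\partial f(\bar x)$ denotes the limiting (Mordukhovich) subdifferential. $f$ is prox-regular at $\bar x$ for $\bar v\in\partial f(\bar x)$ if there exist $\rho>0$, $\varepsilon>0$ such that for all $x,x'$ with $\|x-\bar x\|<\varepsilon$, $\|x'-\bar x\|<\varepsilon$, $|f(x)-f(\bar x)|<\varepsilon$, and all $v\in\partial f(x)$ with $\|v-\bar v\|<\varepsilon$, one has $f(x')\ge f(x)+\langle v,x'-x\rangle-\tfrac12\rho\|x'-x\|^2$. *)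

(* Defs.v *)
From Stdlib Require Import Reals Lra.
Open Scope R_scope.

Record Hilbert := MkHilbert {
  hcar :> Type;
  hzero : hcar;
  hadd : hcar -> hcar -> hcar;
  hopp : hcar -> hcar;
  hscal : R -> hcar -> hcar;
  hinner : hcar -> hcar -> R;
  hadd_assoc : forall x y z, hadd x (hadd y z) = hadd (hadd x y) z;
  hadd_comm : forall x y, hadd x y = hadd y x;
  hadd_zero : forall x, hadd x hzero = x;
  hadd_opp : forall x, hadd x (hopp x) = hzero;
  hscal_one : forall x, hscal 1 x = x;
  hscal_assoc : forall a b x, hscal a (hscal b x) = hscal (a * b) x;
  hscal_distr_l : forall a x y, hscal a (hadd x y) = hadd (hscal a x) (hscal a y);
  hscal_distr_r : forall a b x, hscal (a + b) x = hadd (hscal a x) (hscal b x);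
  hinner_sym : forall x y, hinner x y = hinner y x;
  hinner_add_l : forall x y z, hinner (hadd x y) z = hinner x z + hinner y z;
  hinner_scal_l : forall a x y, hinner (hscal a x) y = a * hinner x y;
  hinner_pos : forall x, 0 <= hinner x x;
  hinner_def : forall x, hinner x x = 0 -> x = hzero;
  hcomplete : forall u : nat -> hcar,
    (forall eps, 0 < eps -> exists N, forall m n, (N <= m)%nat -> (N <= n)%nat ->
        sqrt (hinner (hadd (u m) (hopp (u n))) (hadd (u m) (hopp (u n)))) < eps) ->
    exists l, forall eps, 0 < eps -> exists N, forall n, (N <= n)%nat ->
        sqrt (hinner (hadd (u n) (hopp l)) (hadd (u n) (hopp l))) < eps
}.

Arguments hzero {h}.
Arguments hadd {h} _ _.
Arguments hopp {h} _.
Arguments hscal {h} _ _.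
Arguments hinner {h} _ _.

Definition hsub {X : Hilbert} (x y : X) : X := hadd x (hopp y).
Definition hnorm {X : Hilbert} (x : X) : R := sqrt (hinner x x).

Inductive ER := Fin (r : R) | PInf.

Definition ER_ge (e : ER) (r : R) : Prop :=
  match e with Fin y => r <= y | PInf => True end.

Definition dom {X : Hilbert} (f : X -> ER) (x : X) : Prop :=
  exists y, f x = Fin y.

(** The class Phi_lsc, elements parametrized by (a, v, c) with a >= 0.
    X^* is identified with X via the Riesz representation (inner product). *)
Definition phi_lsc {X : Hilbert} (a : R) (v : X) (c : R) (x : X) : R :=
  - a * (hnorm x) ^ 2 + hinner v x + c.

Definition is_minorant {X : Hilbert} (f : X -> ER) (a : R) (v : X) (c : R) : Prop :=
  0 <= a /\ forall x, ER_ge (f x) (phi_lsc a v c x).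

Definition ER_gt (e : ER) (r : R) : Prop :=
  match e with Fin y => r < y | PInf => True end.

(** f is the pointwise supremum (in R ∪ {+∞}) of the phi in Phi_lsc with
    phi <= f: every such phi lies below f by definition, so the supremum
    equals f(x) iff every real r < f(x) is exceeded by some minorant at x. *)
Definition Phi_lsc_convex {X : Hilbert} (f : X -> ER) : Prop :=
  forall x r, ER_gt (f x) r ->
    exists a v c, is_minorant f a v c /\ r < phi_lsc a v c x.

Definition proper_Phi_lsc {X : Hilbert} (f : X -> ER) : Prop :=
  (exists a v c, is_minorant f a v c) /\ (exists x, dom f x).

Definition in_subdiff_lsc {X : Hilbert} (f : X -> ER) (xb : X) (a : R) (v : X) : Prop :=
  0 <= a /\ exists fxb, f xb = Fin fxb /\
  forall x, ER_ge (f x)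
    (fxb + hinner v (hsub x xb) - a * (hnorm x) ^ 2 + a * (hnorm xb) ^ 2).

Definition in_frechet_subdiff {X : Hilbert} (f : X -> ER) (x : X) (v : X) : Prop :=
  exists fx, f x = Fin fx /\
  forall eps, 0 < eps -> exists delta, 0 < delta /\
    forall y, hnorm (hsub y x) < delta ->
      ER_ge (f y) (fx + hinner v (hsub y x) - eps * hnorm (hsub y x)).

Definition in_limiting_subdiff {X : Hilbert} (f : X -> ER) (x : X) (v : X) : Prop :=
  exists fx, f x = Fin fx /\
  exists (xs : nat -> X) (fxs : nat -> R) (vs : nat -> X),
    (forall k, f (xs k) = Fin (fxs k)) /\
    (forall k, in_frechet_subdiff f (xs k) (vs k)) /\
    Un_cv (fun k => hnorm (hsub (xs k) x)) 0 /\
    Un_cv fxs fx /\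
    (forall y, Un_cv (fun k => hinner (vs k) y) (hinner v y)).

Definition prox_regular {X : Hilbert} (f : X -> ER) (xb vb : X) : Prop :=
  exists fxb, f xb = Fin fxb /\
  exists rho eps, 0 < rho /\ 0 < eps /\
  forall x x' fx v,
    hnorm (hsub x xb) < eps -> hnorm (hsub x' xb) < eps ->
    f x = Fin fx -> Rabs (fx - fxb) < eps ->
    in_limiting_subdiff f x v -> hnorm (hsub v vb) < eps ->
    ER_ge (f x') (fx + hinner v (hsub x' x) - / 2 * rho * (hnorm (hsub x' x)) ^ 2).

(* Main.v *)
Require Import Defs.
From Stdlib Require Import Reals Lra Psatz.
Open Scope R_scope.

Section L.
Variable X : Hilbert.

Lemma inner_zero_l (y : X) : hinner hzero y = 0.
Proof. pose proof (hinner_add_l X hzero hzero y) as H. rewrite hadd_zero in H. lra. Qed.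

Lemma inner_opp_l (x y : X) : hinner (hopp x) y = - hinner x y.
Proof. pose proof (hinner_add_l X x (hopp x) y) as H.
  rewrite hadd_opp, inner_zero_l in H. lra. Qed.

Lemma inner_add_r (x y z : X) : hinner x (hadd y z) = hinner x y + hinner x z.
Proof. rewrite hinner_sym, hinner_add_l, (hinner_sym _ y), (hinner_sym _ z). reflexivity. Qed.

Lemma inner_scal_r (a : R) (x y : X) : hinner x (hscal a y) = a * hinner x y.
Proof. rewrite hinner_sym, hinner_scal_l, (hinner_sym _ y). reflexivity. Qed.

Lemma inner_opp_r (x y : X) : hinner x (hopp y) = - hinner x y.
Proof. rewrite hinner_sym, inner_opp_l, (hinner_sym _ y). reflexivity. Qed.

Lemma hn2 (x : X) : hnorm x ^ 2 = hinner x x.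
Proof. unfold hnorm. simpl. rewrite Rmult_1_r. apply sqrt_sqrt, hinner_pos. Qed.

Lemma hn0 (x : X) : hnorm (hsub x x) = 0.
Proof. unfold hnorm, hsub. rewrite hadd_opp, inner_zero_l. apply sqrt_0. Qed.

Lemma hn_pos (x : X) : 0 <= hnorm x.
Proof. apply sqrt_pos. Qed.

Lemma decomp (x xb : X) : x = hadd (hsub x xb) xb.
Proof. unfold hsub. rewrite <- hadd_assoc, (hadd_comm _ (hopp xb)), hadd_opp, hadd_zero. reflexivity. Qed.

End L.

Ltac expand := unfold hsub; repeat (rewrite ?hinner_add_l, ?inner_add_r, ?hinner_scal_l,
   ?inner_scal_r, ?inner_opp_l, ?inner_opp_r).

Theorem mainTheorem9 (X : Hilbert) (f : X -> ER) (xb vb : X) :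
  proper_Phi_lsc f -> Phi_lsc_convex f -> dom f xb ->
  in_limiting_subdiff f xb vb -> prox_regular f xb vb ->
  (exists ab, 0 <= ab /\ in_subdiff_lsc f xb ab (hadd vb (hscal (2 * ab) xb))) /\
  (exists a v, in_subdiff_lsc f xb a v).
Proof.
  intros [[a0 [v0 [c0 [Ha0 Hmin]]]] _] _ _ Hlim [fxb [Hfxb [rho [eps [Hrho [Heps Hpr]]]]]].
  assert (Hloc : forall x, hnorm (hsub x xb) < eps ->
     ER_ge (f x) (fxb + hinner vb (hsub x xb) - / 2 * rho * (hnorm (hsub x xb)) ^ 2)).
  { intros x Hx. apply (Hpr xb x fxb vb); rewrite ?hn0; auto.
    rewrite Rminus_diag, Rabs_R0; auto. }
  set (w := hadd v0 (hadd (hopp vb) (hscal (-2 * a0) xb))).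
  set (W := hinner w w).
  set (M := W / 2 + fxb - (- a0 * hinner xb xb + hinner v0 xb + c0)).
  set (a := Rmax (rho / 2) (a0 + 1/2 + Rabs M / (eps * eps))).
  assert (Hepsq : 0 < eps * eps) by nra.
  assert (Ha1 : rho / 2 <= a) by apply Rmax_l.
  assert (Ha2 : a0 + 1/2 + Rabs M / (eps * eps) <= a) by apply Rmax_r.
  assert (Hmain : in_subdiff_lsc f xb a (hadd vb (hscal (2 * a) xb))).
  { split; [lra|]. exists fxb. split; auto. intro x.
    set (d := hsub x xb).
    assert (Heq : fxb + hinner (hadd vb (hscal (2 * a) xb)) d - a * hnorm x ^ 2 +
          a * hnorm xb ^ 2 = fxb + hinner vb d - a * hinner d d).
    { rewrite !hn2. unfold d. expand. rewrite (hinner_sym _ xb x). ring. }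
    rewrite Heq. clear Heq.
    destruct (Rlt_or_le (hnorm d) eps) as [Hin | Hout].
    - pose proof (Hloc x Hin) as H. fold d in H. rewrite hn2 in H.
      destruct (f x) as [y|]; simpl in *; auto.
      pose proof (hinner_pos X d). nra.
    - pose proof (Hmin x) as H. unfold phi_lsc in H.
      rewrite (decomp X x xb) in H. fold d in H. rewrite hn2 in H.
      assert (HL : hinner w d = hinner v0 d - hinner vb d - 2 * a0 * hinner xb d).
      { unfold w. expand. ring. }
      assert (HC : 0 <= hinner d d + 2 * hinner w d + W).
      { pose proof (hinner_pos X (hadd d w)) as P. unfold W.
        rewrite hinner_add_l, !inner_add_r in P. rewrite (hinner_sym _ d w) in P. lra. }
      assert (HN : eps * eps <= hinner d d).
      { rewrite <- hn2. pose proof (hn_pos X d). simpl. nra. }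
      assert (HX : hinner (hadd d xb) (hadd d xb) =
                   hinner d d + 2 * hinner xb d + hinner xb xb).
      { rewrite hinner_add_l, !inner_add_r, (hinner_sym _ d xb). ring. }
      rewrite HX, inner_add_r in H. unfold d in H. rewrite <- (decomp X x xb) in H. fold d in H.
      assert (HM : Rabs M <= Rabs M / (eps * eps) * hinner d d).
      { apply (Rle_trans _ (Rabs M / (eps * eps) * (eps * eps))).
        - right. field. lra.
        - apply Rmult_le_compat_l; auto. unfold Rdiv; apply Rmult_le_pos; [apply Rabs_pos | left; apply Rinv_0_lt_compat; lra]. }
      pose proof (Rle_abs M).
      assert (Hk : (Rabs M / (eps * eps)) * hinner d d <= (a - a0 - 1/2) * hinner d d).
      { apply Rmult_le_compat_r; lra. }
      destruct (f x) as [y|]; simpl in *; auto.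
      unfold M in *. lra. }
  assert (0 <= a) by lra.
  split.
  - exists a. auto.
  - exists a, (hadd vb (hscal (2 * a) xb)). auto.
Qed.
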